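(* Let $k\ge 1$ be an integer and define $$F_k(y)=\sum_{\lambda\in\mathscr{P}} y^{\ell(\lambda)} z^{\mu_k(\lambda)} q^{|\lambda|},\qquad G_k(y)=\sum_{\lambda\in\mathscr{D}} y^{\ell(\lambda)} z^{\mu_k(\lambda)} q^{|\lambda|}.$$ Then $$F_k(y) - F_k(yq) = \frac{yzq}{(yq;q)_k}F_k(yq^k)$$ and $$G_k(y) - G_k(yq) = yzq(-yq^2;q)_{k-1}G_k(yq^k).$$
   Context: $\mathscr{P}$ is the set of all integer partitions and $\mathscr{D}$ the set of partitions into distinct parts (both including the empty partition). For a partition $\lambda$, $|\lambda|$ is the sum of its parts and $\ell(\lambda)$ its number of parts. For a positive integer $k$, the $k$-measure $\mu_k(\lambda)$ is the length of the longest subsequence of the parts of $\lambda$ (listed in weakly decreasing order) in which the difference between any two consecutive members of the subsequence is at least $k$. The $q$-Pochhammer symbol is $(A;q)_n=\prod_{j=0}^{n-1}(1-Aq^j)$. The series are regarded as formal power series (or with $|q|<1$). *)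

(* Defs.v *)
(* Formal power series in q with coefficients in a
   commutative ring R are represented as functions nat -> R. *)
From mathcomp Require Import all_boot all_order all_algebra.
Set Implicit Arguments. Unset Strict Implicit. Unset Printing Implicit Defensive.
Import Order.TTheory GRing.Theory Num.Theory.
Local Open Scope ring_scope.

Definition is_partition (l : seq nat) : bool :=
  sorted geq l && all (fun x => 0 < x)%N l.

Fixpoint seqs_of_len (len : nat) (s : seq nat) : seq (seq nat) :=
  if len is len'.+1 then [seq x :: t | x <- s, t <- seqs_of_len len' s]
  else [:: [::]].

Definition partitions_upto (n : nat) : seq (seq nat) :=
  [seq l <- flatten [seq seqs_of_len len (iota 1 n) | len <- iota 0 n.+1]
     | is_partition l && (sumn l <= n)%N].

(* k-measure: length of a longest subsequence of the parts (listed in weakly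
   decreasing order) in which consecutive members differ by at least k *)
Definition kmeasure (k : nat) (l : seq nat) : nat :=
  \max_(m : (size l).-tuple bool | sorted (fun a b => (b + k <= a)%N) (mask m l))
     size (mask m l).

Definition series (R : Type) := nat -> R.

Section Series.
Variable R : comNzRingType.
Definition sadd (f g : series R) : series R := fun n => f n + g n.
Definition ssub (f g : series R) : series R := fun n => f n - g n.
Definition smul (f g : series R) : series R :=
  fun n => \sum_(i < n.+1) f i * g (n - i)%N.
Definition sone : series R := fun n => if n == 0%N then 1 else 0.
Definition smono (c : R) (j : nat) : series R := fun n => if n == j then c else 0.
Definition spow (f : series R) (e : nat) : series R := iter e (smul f) sone.
Definition sprod (I : Type) (r : seq I) (F : I -> series R) : series R :=
  foldr (fun i acc => smul (F i) acc) sone r.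

(* Generating function  sum_{lambda in P} Y^{l(lambda)} z^{mu_k(lambda)} q^{|lambda|}
   with Y a power series in q (substitution of Y for y); the coefficient of q^n
   only receives contributions from lambda with |lambda| <= n. *)
Definition genfun (P : pred (seq nat)) (k : nat) (z : R) (Y : series R) : series R :=
  fun n => \sum_(l <- partitions_upto n | P l)
      smul (spow Y (size l)) (smono (z ^+ kmeasure k l) (sumn l)) n.

(* F_k and G_k evaluated at y q^j *)
Definition Fk (k : nat) (z : R) (Y : series R) := genfun predT k z Y.
Definition Gk (k : nat) (z : R) (Y : series R) := genfun (fun l => uniq l) k z Y.

Definition poch (y : R) (a m : nat) : series R :=
  sprod (iota 0 m) (fun j => ssub sone (smono y (a + j))).
Definition pochneg (y : R) (a m : nat) : series R :=
  sprod (iota 0 m) (fun j => sadd sone (smono y (a + j))).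
End Series.

(* Main.v *)
Require Import Defs.
From mathcomp Require Import all_boot all_order all_algebra zify.
From Stdlib Require Import FunctionalExtensionality.
Set Implicit Arguments. Unset Strict Implicit. Unset Printing Implicit Defensive.

Lemma geq_transitive : transitive geq.
Proof. by move=> b a c /= Hab Hbc; apply: leq_trans Hbc Hab. Qed.
Lemma geq_antisym : antisymmetric geq.
Proof. by move=> a b /andP[/= H1 H2]; apply/eqP; rewrite eqn_leq H1 H2. Qed.
Lemma geq_tot : total geq.
Proof. by move=> a b /=; rewrite leq_total. Qed.

Definition ins (v : nat) (l : seq nat) := sort geq (v :: l).

Lemma perm_ins v l : perm_eq (ins v l) (v :: l).
Proof. by rewrite /ins perm_sort. Qed.

Lemma count_ins p v l : count p (ins v l) = p v + count p l.
Proof. by rewrite (permP (perm_ins v l)). Qed.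

Lemma count_remP p v (l : seq nat) : v \in l -> count p l = p v + count p (rem v l).
Proof. by move=> H; rewrite (permP (perm_to_rem H)). Qed.

Lemma sorted_ins v l : sorted geq (ins v l).
Proof. exact: (sort_sorted geq_tot). Qed.

Lemma sorted_rem v l : sorted geq l -> sorted geq (rem v l).
Proof. exact/subseq_sorted/rem_subseq/geq_transitive. Qed.

Lemma ins_rem v l : v \in l -> sorted geq l -> ins v (rem v l) = l.
Proof.
move=> Hv Hs; apply: (sorted_eq geq_transitive geq_antisym) => //.
  exact: sorted_ins.
apply: perm_trans (perm_ins _ _) _; rewrite perm_sym; exact: perm_to_rem.
Qed.

Lemma rem_ins v l : sorted geq l -> rem v (ins v l) = l.
Proof.
move=> Hs; apply: (sorted_eq geq_transitive geq_antisym) => //.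
  exact/sorted_rem/sorted_ins.
have Hv : v \in ins v l by rewrite (perm_mem (perm_ins v l)) mem_head.
apply/permP => p; apply/eqP; rewrite -(eqn_add2l (p v)) -count_remP //.
by rewrite count_ins.
Qed.

Lemma sumn_perm_ins v l : sumn (ins v l) = v + sumn l.
Proof. by rewrite (perm_sumn (perm_ins v l)). Qed.

Lemma sumn_rem v (l : seq nat) : v \in l -> sumn l = v + sumn (rem v l).
Proof. by move=> H; rewrite (perm_sumn (perm_to_rem H)). Qed.

Lemma size_ins v l : size (ins v l) = (size l).+1.
Proof. by rewrite (perm_size (perm_ins v l)). Qed.

Lemma size_rem' v (l : seq nat) : v \in l -> size l = (size (rem v l)).+1.
Proof. by move=> H; rewrite (perm_size (perm_to_rem H)). Qed.

Lemma mem_ins x v l : (x \in ins v l) = (x == v) || (x \in l).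
Proof. by rewrite (perm_mem (perm_ins v l)) inE. Qed.

Lemma all_ins a v l : all a (ins v l) = a v && all a l.
Proof. by rewrite (perm_all _ (perm_ins v l)). Qed.

Lemma uniq_ins v l : uniq (ins v l) = (v \notin l) && uniq l.
Proof. by rewrite (perm_uniq (perm_ins v l)). Qed.

Lemma all_rem a v (l : seq nat) : all a l -> all a (rem v l).
Proof. move=> H; apply/allP => x Hx; exact: (allP H) _ (mem_rem Hx). Qed.

Lemma part_ins v l : 0 < v -> is_partition l -> is_partition (ins v l).
Proof.
move=> Hv /andP[_ Ha]; rewrite /is_partition sorted_ins all_ins Hv Ha. done.
Qed.

Lemma part_rem v l : is_partition l -> is_partition (rem v l).
Proof. by move=> /andP[Hs Ha]; rewrite /is_partition sorted_rem // all_rem. Qed.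

Lemma filter_ins p v l : ~~ p v -> sorted geq l -> filter p (ins v l) = filter p l.
Proof.
move=> Hp Hs; apply: (sorted_eq geq_transitive geq_antisym).
- exact/(sorted_filter geq_transitive)/sorted_ins.
- exact/(sorted_filter geq_transitive).
apply: perm_trans (perm_filter _ (perm_ins v l)) _; by rewrite /= (negbTE Hp).
Qed.

Definition Rk (k : nat) := fun a b : nat => (b + k <= a)%N.

Lemma Rk_trans k : transitive (Rk k).
Proof. move=> b a c; rewrite /Rk => H1 H2; apply: leq_trans H1; apply: leq_trans H2 _; exact: leq_addr. Qed.

Lemma kmeasure_le k l N :
  (forall s, subseq s l -> sorted (Rk k) s -> (size s <= N)%N) -> (kmeasure k l <= N)%N.
Proof.
move=> H; rewrite /kmeasure; apply/bigmax_leqP => m Hm.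
apply: H => //; exact: mask_subseq.
Qed.

Lemma kmeasure_ub k l s :
  subseq s l -> sorted (Rk k) s -> (size s <= kmeasure k l)%N.
Proof.
case/subseqP => m Hm -> Hs.
have Hm' : size m == size l by rewrite Hm.
pose t : (size l).-tuple bool := Tuple Hm'.
have -> : mask m l = mask t l by [].
rewrite /kmeasure.
exact: (@leq_bigmax_cond _ (fun t : (size l).-tuple bool => sorted (fun a b => (b + k <= a)%N) (mask t l)) (fun t : (size l).-tuple bool => size (mask t l)) t Hs).
Qed.

Lemma kmeasure_shift k j l : kmeasure k (map (addn j) l) = kmeasure k l.
Proof.
apply/eqP; rewrite eqn_leq; apply/andP; split.
  apply: kmeasure_le => s /subseqP[m Hm ->]; rewrite -map_mask sorted_map size_map => Hs.
  apply: kmeasure_ub; first exact: mask_subseq.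
  by apply: sub_sorted Hs => a b; rewrite /Rk /relpre /= -addnA leq_add2l.
apply: kmeasure_le => s Hsub Hs.
rewrite -(size_map (addn j)); apply: kmeasure_ub; first exact: map_subseq.
by rewrite sorted_map; apply: sub_sorted Hs => a b; rewrite /Rk /relpre /= -addnA leq_add2l.
Qed.

Lemma sorted_split k l : sorted geq l ->
  l = filter (fun x => k < x) l ++ filter (fun x => x <= k) l.
Proof.
elim: l => [|a l IH] //= Hp.
have Hl := path_sorted Hp.
have Ha := order_path_min geq_transitive Hp.
case: ltnP => Hak /=.
  by rewrite -IH.
have -> : filter (fun x => k < x) l = [::].
  apply/eqP; rewrite -[_ == _]negbK -has_filter; apply/hasPn => x Hx.
  by rewrite -leqNgt; apply: leq_trans Hak; exact: (allP Ha).
have -> // : filter (fun x => x <= k) l = l.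
apply/all_filterP/allP => x Hx; apply: leq_trans Hak; exact: (allP Ha).
Qed.

Lemma count_small k s : all (fun x => 0 < x) s -> sorted (Rk k) s ->
  (count (fun x => x <= k) s <= 1)%N.
Proof.
elim: s => [|a s IH] //= Hpos Hp.
case/andP: Hpos => Ha Hpos.
have Hmin := order_path_min (@Rk_trans k) Hp.
case: (leqP a k) => Hak /=.
  case: s {IH Hp} Hpos Hmin => [|b s] //= /andP[Hb _] /andP[Hba _].
  exfalso; move: Hba; rewrite /Rk => Hba.
  have : b + k <= k by apply: leq_trans Hak.
  by rewrite -{2}(add0n k) leq_add2r leqNgt Hb.
by rewrite add0n; apply: IH => //; exact: path_sorted Hp.
Qed.

Lemma kmeasure_one k l : 0 < k -> is_partition l -> 1 \in l ->
  kmeasure k l = (kmeasure k (filter (fun x => k < x) l)).+1.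
Proof.
move=> Hk /andP[Hs Hpos] H1.
apply/eqP; rewrite eqn_leq; apply/andP; split.
  apply: kmeasure_le => s Hsub Hsort.
  rewrite -(count_predC (fun x => k < x)).
  have -> : count (predC (fun x => k < x)) s = count (fun x => x <= k) s.
    by apply: eq_count => x /=; rewrite -leqNgt.
  rewrite -[(kmeasure _ _).+1]addn1; apply: leq_add; last first.
    apply: count_small => //.
    by apply/allP => x Hx; apply: (allP Hpos); exact: (mem_subseq Hsub).
  rewrite -size_filter; apply: kmeasure_ub; last exact: (sorted_filter (@Rk_trans k) _ Hsort).
  rewrite subseq_filter filter_all /=; apply: subseq_trans Hsub; exact: filter_subseq.
have Hd := sorted_split k Hs.
have Hlo : 1 \in filter (fun x => x <= k) l by rewrite mem_filter Hk H1.
have Hp1 : 0 < kmeasure k l.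
  by apply: (@kmeasure_ub k l [:: 1]); rewrite ?sub1seq.
rewrite -(prednK Hp1) ltnS.
apply: kmeasure_le => s Hsub Hsort.
rewrite -ltnS prednK // -(size_rcons s 1); apply: kmeasure_ub.
  rewrite -cats1 Hd; apply: cat_subseq => //; by rewrite sub1seq.
have Hall : all (fun x => k < x) s.
  by apply/allP => x Hx; move: (mem_subseq Hsub Hx); rewrite mem_filter => /andP[].
case: s Hsub Hsort Hall => [|a s] // Hsub Hsort Hall.
rewrite /= rcons_path -/(sorted (Rk k) (a :: s)) Hsort /= /Rk add1n.
have : last a s \in a :: s by exact: mem_last.
by move=> Hm; exact: (allP Hall) _ Hm.
Qed.

Lemma mem_seqs_of_len len (s t : seq nat) :
  (t \in seqs_of_len len s) = (size t == len) && all (mem s) t.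
Proof.
elim: len t => [|len IH] t /=.
  by rewrite inE; case: t.
apply/allpairsP/idP.
  by case=> [[x u]] /= [Hx Hu ->]; rewrite /= eqSS Hx -IH Hu.
case: t => [|a u] //= /andP[Hs /andP[Ha Hu]].
by exists (a, u); split => //; rewrite IH Hu andbT; exact: Hs.
Qed.

Lemma uniq_seqs_of_len len (s : seq nat) : uniq s -> uniq (seqs_of_len len s).
Proof.
move=> Hs; elim: len => [|len IH] //=.
apply: allpairs_uniq => // [[a u] [b w]] _ _ /= [-> ->] //.
Qed.

Lemma uniq_flatten_map (T : eqType) (r : seq nat) (f : nat -> seq T) :
  uniq r -> (forall i, uniq (f i)) ->
  (forall i j x, x \in f i -> x \in f j -> i = j) ->
  uniq (flatten (map f r)).
Proof.
move=> Hr Hf Hd; elim: r Hr => [|a r IH] //= /andP[Ha Hr].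
rewrite cat_uniq Hf IH // andbT; apply/hasPn => x /flattenP[u /mapP[b Hb ->] Hx].
apply/negP => Hxa; have Hab := Hd _ _ _ Hxa Hx; subst b.
by rewrite Hb in Ha.
Qed.

Lemma mem_sumn x (l : seq nat) : x \in l -> x <= sumn l.
Proof.
elim: l => [|a l IH] //=; rewrite inE => /orP[/eqP ->|H].
  exact: leq_addr.
by apply: leq_trans (IH H) _; exact: leq_addl.
Qed.

Lemma size_sumn (l : seq nat) : all (fun x => 0 < x) l -> size l <= sumn l.
Proof.
elim: l => [|a l IH] //= /andP[Ha Hl].
by rewrite -add1n; apply: leq_add => //; exact: IH.
Qed.

Lemma mem_PU n l : (l \in partitions_upto n) = is_partition l && (sumn l <= n).
Proof.
rewrite /partitions_upto mem_filter andb_idr // => /andP[/andP[Hs Hpos] Hn].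
apply/flattenP; exists (seqs_of_len (size l) (iota 1 n)).
  apply/mapP; exists (size l) => //; rewrite mem_iota add0n ltnS; exact: leq_trans (size_sumn Hpos) Hn.
rewrite mem_seqs_of_len eqxx /=; apply/allP => x Hx.
change (x \in iota 1 n).
rewrite mem_iota (allP Hpos) //= add1n ltnS; exact: leq_trans (mem_sumn Hx) Hn.
Qed.

Lemma uniq_PU n : uniq (partitions_upto n).
Proof.
apply: filter_uniq; apply: uniq_flatten_map.
- exact: iota_uniq.
- move=> i; apply: uniq_seqs_of_len; exact: iota_uniq.
move=> i j x; rewrite !mem_seqs_of_len => /andP[/eqP <- _] /andP[/eqP <- _] //.
Qed.

Lemma sumn_shift j (l : seq nat) : sumn (map (addn j) l) = j * size l + sumn l.
Proof.
elim: l => [|a l IH] /=; first by rewrite muln0.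
by rewrite IH mulnS; rewrite !addnA; congr (_ + _); rewrite addnAC.
Qed.

Lemma unshift_shift j (l : seq nat) : map (subn^~ j) (map (addn j) l) = l.
Proof. by rewrite -map_comp map_id_in // => x _ /=; rewrite addKn. Qed.

Lemma shift_unshift j (l : seq nat) : all (fun x => j < x) l ->
  map (addn j) (map (subn^~ j) l) = l.
Proof.
move=> H; rewrite -map_comp map_id_in // => x Hx /=.
by rewrite subnKC // ltnW // (allP H).
Qed.

Lemma part_shift j l : is_partition l -> is_partition (map (addn j) l).
Proof.
case/andP=> Hs Hp; rewrite /is_partition sorted_map; apply/andP; split.
  by apply: sub_sorted Hs => a b; rewrite /relpre /= leq_add2l.
by rewrite all_map; apply: sub_all Hp => x /= Hx; rewrite addn_gt0 Hx orbT.
Qed.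

Lemma all_shift j l : is_partition l -> all (fun x => j < x) (map (addn j) l).
Proof.
case/andP=> _ Hp; rewrite all_map; apply: sub_all Hp => x /= Hx.
by rewrite -{1}(addn0 j) ltn_add2l.
Qed.

Lemma part_unshift j l : is_partition l -> all (fun x => j < x) l ->
  is_partition (map (subn^~ j) l).
Proof.
case/andP=> Hs _ Hj; rewrite /is_partition sorted_map; apply/andP; split.
  by apply: sub_sorted Hs => a b; rewrite /relpre /= => H; apply: leq_sub2r.
by rewrite all_map; apply: sub_all Hj => x /= Hx; rewrite subn_gt0.
Qed.

Import GRing.Theory.
Local Open Scope ring_scope.

Section SeriesLemmas.
Variable R : comNzRingType.
Implicit Types f g h : series R.

Definition trunc (N : nat) (f : series R) : {poly R} := \poly_(i < N) f i.

Lemma smul_poly f g N n : (n < N)%N -> smul f g n = (trunc N f * trunc N g)`_n.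
Proof.
move=> Hn; rewrite coefM /smul; apply: eq_bigr => i _.
rewrite /trunc !coef_poly; have Hi : (i < N)%N by apply: leq_ltn_trans Hn; rewrite -ltnS.
rewrite Hi; have -> // : (n - i < N)%N by apply: leq_ltn_trans (leq_subr _ _) Hn.
Qed.

Lemma coefM_ext (p p' q : {poly R}) n :
  (forall j, (j <= n)%N -> p`_j = p'`_j) -> (p * q)`_n = (p' * q)`_n.
Proof. by move=> H; rewrite !coefM; apply: eq_bigr => i _; rewrite H // -ltnS. Qed.

Lemma smulC f g : smul f g = smul g f.
Proof.
apply: functional_extensionality => n.
by rewrite (smul_poly _ _ (ltnSn n)) (smul_poly _ _ (ltnSn n)) mulrC.
Qed.

Lemma smulA f g h : smul (smul f g) h = smul f (smul g h).
Proof.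
apply: functional_extensionality => n.
rewrite (smul_poly _ _ (ltnSn n)) (smul_poly f _ (ltnSn n)).
rewrite (@coefM_ext _ (trunc n.+1 f * trunc n.+1 g)); last first.
  move=> j Hj; rewrite /trunc coef_poly ltnS Hj.
  by apply: smul_poly; rewrite ltnS.
rewrite -mulrA [trunc _ f * (_ * _)]mulrC [trunc _ f * trunc _ (smul g h)]mulrC.
apply: coefM_ext => j Hj; rewrite /trunc coef_poly ltnS Hj.
by symmetry; apply: smul_poly; rewrite ltnS.
Qed.

Lemma smul_monol (a : R) b f n :
  smul (smono a b) f n = if (b <= n)%N then a * f (n - b)%N else 0.
Proof.
rewrite /smul /smono; case: leqP => Hb.
  rewrite (bigD1 (Ordinal (leq_ltn_trans Hb (ltnSn n)))) //= eqxx big1 ?addr0 //.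
  by move=> i /negbTE Hi; rewrite -val_eqE /= in Hi; rewrite Hi mul0r.
rewrite big1 // => i _; case: eqP => [Hi|]; last by rewrite mul0r.
by exfalso; move: (ltn_ord i); rewrite Hi ltnS leqNgt Hb.
Qed.

Lemma smul_sonel f : smul (sone R) f = f.
Proof.
apply: functional_extensionality => n.
by rewrite (smul_monol 1 0 f n) leq0n mul1r subn0.
Qed.

Lemma smul_subl f g h n : smul (ssub f g) h n = smul f h n - smul g h n.
Proof. by rewrite /smul /ssub -sumrB; apply: eq_bigr => i _; rewrite mulrBl. Qed.

Lemma smul_addl f g h n : smul (sadd f g) h n = smul f h n + smul g h n.
Proof. by rewrite /smul /sadd -big_split; apply: eq_bigr => i _; rewrite mulrDl. Qed.

Lemma smono_mul (a c : R) b d : smul (smono a b) (smono c d) = smono (a * c) (b + d).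
Proof.
apply: functional_extensionality => n; rewrite smul_monol /smono.
have [Hb|Hb] := leqP b n.
  by rewrite -(eqn_add2l b) subnKC //; case: ifP; rewrite ?mulr0.
by have -> : (n == b + d) = false by apply: negbTE; rewrite neq_ltn (leq_trans Hb (leq_addr _ _)).
Qed.

Lemma spow_mono (a : R) j s : spow (smono a j) s = smono (a ^+ s) (j * s).
Proof.
elim: s => [|s IH]; first by rewrite expr0 muln0.
by rewrite /spow iterS -/(spow _ _) IH smono_mul exprS mulnS.
Qed.

Lemma sprod_iota_succ len (F : nat -> series R) :
  sprod (iota 0 len.+1) F = smul (F 0%N) (sprod (iota 0 len) (fun j => F j.+1)).
Proof.
rewrite /sprod /=; congr smul.
by rewrite -(addn0 1%N) iotaDl foldr_map.
Qed.
End SeriesLemmas.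

Lemma big_bij (R : comNzRingType) (I : eqType) (s t : seq I) (P Q : pred I)
    (F G : I -> R) (f g : I -> I) :
  uniq s -> uniq t ->
  (forall x, x \in s -> P x -> [/\ f x \in t, Q (f x), g (f x) = x & F x = G (f x)]) ->
  (forall x, x \in t -> Q x -> [/\ g x \in s, P (g x) & f (g x) = x]) ->
  \sum_(x <- s | P x) F x = \sum_(x <- t | Q x) G x.
Proof.
move=> Us Ut H1 H2.
rewrite -big_filter -[RHS]big_filter.
transitivity (\sum_(x <- filter P s) G (f x)).
  apply: eq_big_seq => x; rewrite mem_filter => /andP[Px xs].
  by case: (H1 x xs Px).
rewrite -(big_map f predT G); apply: perm_big; apply: uniq_perm.
- rewrite map_inj_in_uniq ?filter_uniq // => a b.
  rewrite !mem_filter => /andP[Pa sa] /andP[Pb sb] Hf.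
  case: (H1 a sa Pa) => _ _ Ha _; case: (H1 b sb Pb) => _ _ Hb _.
  by rewrite -Ha Hf Hb.
- exact: filter_uniq.
move=> x; apply/mapP/idP.
  case=> a; rewrite mem_filter => /andP[Pa sa] ->.
  by case: (H1 a sa Pa) => Ht HQ _ _; rewrite mem_filter HQ Ht.
rewrite mem_filter => /andP[Qx xt]; case: (H2 x xt Qx) => Hs HP Hfg.
by exists (g x); rewrite // mem_filter HP Hs.
Qed.

Section Gen.
Variable R : comNzRingType.
Variables (k : nat) (y z : R).

Definition wt (l : seq nat) : R := y ^+ size l * z ^+ kmeasure k l.

Definition W (P : pred (seq nat)) (n : nat) : R :=
  \sum_(l <- partitions_upto n | P l && (sumn l == n)) wt l.

Lemma W_ext P Q n : (forall l, is_partition l -> P l = Q l) -> W P n = W Q n.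
Proof.
move=> H; rewrite /W [LHS]big_seq_cond [RHS]big_seq_cond; apply: eq_bigl => l.
case Hl: (l \in _) => //=; rewrite mem_PU in Hl; case/andP: Hl => Hl _.
by rewrite H.
Qed.

Lemma W_split P A n : W P n = W (fun l => P l && A l) n + W (fun l => P l && ~~ A l) n.
Proof.
rewrite /W (bigID A) /=; congr (_ + _); apply: eq_bigl => l; 
  by rewrite -!andbA; congr (_ && _); rewrite andbC.
Qed.

Lemma W0 (P : pred (seq nat)) n : (forall l, is_partition l -> P l -> sumn l != n) -> W P n = 0.
Proof.
move=> H; rewrite /W big_seq_cond big1 // => l /andP[Hl /andP[HP /eqP Hs]].
by move: (H l); rewrite mem_PU in Hl; case/andP: Hl => Hl _; rewrite Hs eqxx => /(_ Hl HP).
Qed.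

Lemma genfun_W P j n :
  genfun P k z (smono y j) n = W (fun l => all (fun x => (j < x)%N) l && P (map (subn^~ j) l)) n.
Proof.
rewrite /genfun.
transitivity (\sum_(l <- partitions_upto n | P l && (n == j * size l + sumn l)%N) wt l).
  rewrite big_mkcondr /=; apply: eq_bigr => l _.
  by rewrite spow_mono smono_mul /smono.
apply: (big_bij (f := map (addn j)) (g := map (subn^~ j))); rewrite ?uniq_PU //.
  move=> l; rewrite mem_PU => /andP[Hl Hn] /andP[HP /eqP Hs].
  rewrite unshift_shift mem_PU part_shift //= sumn_shift -Hs leqnn eqxx all_shift //.
  by rewrite HP; split => //; rewrite /wt size_map kmeasure_shift.
move=> l Hl0 /andP[/andP[Hj HP] /eqP Hs]; move: Hl0; rewrite mem_PU => /andP[Hl Hn].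
rewrite shift_unshift // mem_PU part_unshift //= HP; split => //.
  apply: leq_trans Hn; rewrite -{2}(shift_unshift Hj) sumn_shift; exact: leq_addl.
by rewrite /= -sumn_shift shift_unshift // Hs.
Qed.

Lemma W_step (P Q : pred (seq nat)) v n : (0 < v)%N ->
  (forall l, is_partition l -> Q l -> P (ins v l) /\ kmeasure k (ins v l) = kmeasure k l) ->
  (forall l, is_partition l -> P l -> v \in l /\ Q (rem v l)) ->
  W P n = if (v <= n)%N then y * W Q (n - v) else 0.
Proof.
move=> Hv0 H1 H2; case: leqP => Hvn; last first.
  apply: W0 => l Hl HP; have [Hv _] := H2 l Hl HP.
  by rewrite neq_ltn; apply/orP; right; apply: leq_trans Hvn (mem_sumn Hv).
rewrite /W big_distrr /=.
apply: (big_bij (f := rem v) (g := ins v)); rewrite ?uniq_PU //.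
  move=> l Hl0 /andP[HP /eqP Hs]; move: Hl0; rewrite mem_PU => /andP[Hl Hn].
  have [Hv HQ] := H2 l Hl HP.
  have Hsum := sumn_rem Hv.
  have Hsr : sumn (rem v l) = (n - v)%N by rewrite -Hs Hsum addKn.
  have Hir : ins v (rem v l) = l by apply: ins_rem => //; case/andP: Hl.
  rewrite mem_PU part_rem //= HQ Hsr leqnn eqxx Hir; split => //.
  have [_ Hk] := H1 _ (part_rem v Hl) HQ; rewrite Hir in Hk.
  by rewrite /wt Hk (size_rem' Hv) exprS mulrA.
move=> l Hl0 /andP[HQ /eqP Hs]; move: Hl0; rewrite mem_PU => /andP[Hl Hn].
have [HP _] := H1 l Hl HQ.
rewrite mem_PU part_ins //= sumn_perm_ins Hs subnKC // leqnn HP eqxx rem_ins //.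
by case/andP: Hl.
Qed.

Lemma W_last (Pl Ph : pred (seq nat)) n : (0 < k)%N ->
  (forall l, is_partition l -> Pl l -> [/\ 1%N \in l, count_mem 1%N l = 1%N,
       all (fun x => (x == 1%N) || (k < x)%N) l & Ph (filter (fun x => (k < x)%N) l)]) ->
  (forall h, is_partition h -> all (fun x => (k < x)%N) h -> Ph h -> Pl (h ++ [:: 1%N])) ->
  W Pl n = if (0 < n)%N then y * z * W (fun h => all (fun x => (k < x)%N) h && Ph h) n.-1 else 0.
Proof.
move=> Hk H1 H2; case: (posnP n) => Hn0.
  apply: W0 => l Hl HPl; have [H1l _ _ _] := H1 l Hl HPl.
  rewrite Hn0 -lt0n; apply: leq_trans (mem_sumn H1l); case/andP: Hl => _ /allP; exact.
rewrite /W big_distrr /=.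
have Hdec : forall l, is_partition l -> Pl l -> l = filter (fun x => (k < x)%N) l ++ [:: 1%N].
  move=> l Hl HPl; have [H1l Hc Ha _] := H1 l Hl HPl.
  rewrite {1}(sorted_split k (proj1 (andP Hl))); congr (_ ++ _).
  set lo := filter _ l.
  have Hlo : all (pred1 1%N) lo.
    apply/allP => x; rewrite mem_filter => /andP[Hxk Hx].
    by move: (allP Ha x Hx); rewrite /= ltnNge Hxk orbF.
  rewrite (all_pred1P _ _ Hlo) size_filter.
  have -> : count (fun x => (x <= k)%N) l = count_mem 1%N l.
    apply: eq_in_count => x Hx; move: (allP Ha x Hx) => /orP[/eqP ->|Hkx].
      by rewrite Hk /= eqxx.
    rewrite leqNgt Hkx /=; apply/esym/negbTE; apply/eqP => Hx1.
    by move: Hkx; rewrite Hx1 ltnNge Hk.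
  by rewrite Hc.
apply: (big_bij (f := filter (fun x => (k < x)%N)) (g := fun h => h ++ [:: 1%N])); rewrite ?uniq_PU //.
  move=> l Hl0 /andP[HPl /eqP Hs]; move: Hl0; rewrite mem_PU => /andP[Hl Hn].
  have [H1l Hc Ha HPh] := H1 l Hl HPl.
  have Hd := Hdec l Hl HPl.
  set hi := filter _ l in Hd *.
  have Hsh : sumn hi = n.-1 by move: Hs; rewrite Hd sumn_cat /= addn0 addn1 => <-.
  have Hphi : is_partition hi.
    case/andP: Hl => Hs' Hp'; rewrite /is_partition (sorted_filter geq_transitive) //=.
    by rewrite all_filter; apply: sub_all Hp' => x /= ->; rewrite implybT.
  rewrite mem_PU Hphi Hsh leqnn eqxx filter_all HPh -Hd; split => //.
  rewrite /wt (kmeasure_one Hk Hl H1l) -/hi {1}Hd size_cat /= addn1 !exprS.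
  by rewrite -!mulrA; congr (_ * _); rewrite mulrCA.
move=> h Hh0 /andP[/andP[Hall HPh] /eqP Hs]; move: Hh0; rewrite mem_PU => /andP[Hh Hn].
have HPl := H2 h Hh Hall HPh.
have Hpl : is_partition (h ++ [:: 1%N]).
  case/andP: Hh => Hs' Hp'; rewrite /is_partition all_cat Hp' /= andbT.
  case: h Hs' Hp' {Hall HPh HPl Hs Hn} => [|a h] //= Hs' Hp'.
  rewrite cat_path Hs' /= andbT; have : all (leq 1) (a :: h) by exact: Hp'.
  by move=> /allP; apply; exact: mem_last.
rewrite mem_PU Hpl HPl sumn_cat Hs /= addn0 addn1 prednK // leqnn eqxx; split => //.
rewrite filter_cat /= ltnNge Hk /= cats0; exact/all_filterP.
Qed.
End Gen.

Lemma mem_count (x : nat) l : (x \in l) = (0 < count_mem x l)%N.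
Proof. by rewrite -has_pred1 has_count. Qed.

Definition Dp (m : nat) (l : seq nat) : bool :=
  (0 < count_mem 1%N l)%N && ((m == 0%N) || (count_mem 1%N l == 1%N))
  && all (fun x => (x == 1%N) || (m < x)%N) l.

Definition Bp (m : nat) (l : seq nat) : bool :=
  uniq l && (1%N \in l) && all (fun x => (x == 1%N) || (m < x)%N) l.

Section Main.
Variable R : comNzRingType.
Variables (k : nat) (y z : R).
Hypothesis Hk : (0 < k)%N.

Definition WS P : series R := fun n => W k y z P n.

Lemma kmeasure_ins v l : (0 < v)%N -> (v <= k)%N -> is_partition l -> 1%N \in l ->
  kmeasure k (ins v l) = kmeasure k l.
Proof.
move=> Hv Hvk Hl H1.
rewrite (kmeasure_one Hk (part_ins Hv Hl)); last by rewrite mem_ins H1 orbT.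
rewrite (kmeasure_one Hk Hl H1) filter_ins //; first by rewrite -leqNgt.
by case/andP: Hl.
Qed.

Lemma F_step m : (m < k)%N ->
  smul (ssub (sone R) (smono y m.+1)) (WS (Dp m)) = WS (Dp m.+1).
Proof.
move=> Hmk; apply: functional_extensionality => n.
rewrite smul_subl smul_sonel smul_monol /WS.
set A := fun l : seq nat => if m == 0%N then (1 < count_mem 1%N l)%N else m.+1 \in l.
rewrite (W_split _ _ _ _ A).
rewrite (@W_step _ _ _ _ _ (Dp m) m.+1) //; last first.
- move=> l Hl /andP[HD HA]; move: HA; rewrite /A.
  case: eqP => [Hm0|Hm0] HA.
    subst m; have Hv : 1%N \in l by rewrite mem_count; apply: ltnW.
    split => //; move: HD; rewrite /Dp !eqxx /= => /andP[_ Ha].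
    rewrite (all_rem _ Ha) andbT; move: HA; rewrite (count_remP (pred1 1%N : pred nat) Hv) /= andbT.
    by move=> H; lia.
  split => //; move: HD; rewrite /Dp => /andP[/andP[Hc Hc1] Ha].
  rewrite (all_rem _ Ha) andbT (count_remP (pred1 1%N : pred nat) HA) /= in Hc Hc1 *.
  have Hm : (m == 0%N) = false by apply/eqP.
  by move: Hc Hc1; rewrite eqSS Hm add0n /= => -> ->.
- move=> l Hl; rewrite /Dp /A => /andP[/andP[Hc Hc1] Ha].
  have H1 : 1%N \in l by rewrite mem_count.
  rewrite kmeasure_ins //; split => //.
  rewrite !count_ins all_ins Ha /= ltnS leqnn orbT andbT.
  case: (eqVneq m 0%N) => [Hm0|Hm0].
    by subst m; rewrite /= add1n ltnS.
  rewrite eqSS (negbTE Hm0) /= add0n Hc /=.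
  by rewrite (negbTE Hm0) /= in Hc1; rewrite Hc1 mem_ins eqxx.
rewrite addrC addKr; apply: W_ext => l Hl; rewrite /Dp /A.
case/andP: Hl => _ Hpos.
case: eqP => [Hm0|Hm0].
  subst m; rewrite /=.
  have -> : all (fun x => (x == 1%N) || (0 < x)%N) l.
    by apply: sub_all Hpos => x /= ->; rewrite orbT.
  have -> : all (fun x => (x == 1%N) || (1 < x)%N) l.
    by apply: sub_all Hpos => x /=; case: x => [|[|x]].
  rewrite !andbT; case: (count_mem 1%N l) => [|[|c]] //.
rewrite /=; case Hc: (0 < count_mem 1%N l)%N => //=.
case Hc1: (count_mem 1%N l == 1%N) => //=.
apply/idP/idP.
  case/andP=> Ha Hn; apply/allP => x Hx; move: (allP Ha x Hx) => /orP[->//|Hmx].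
  apply/orP; right; rewrite ltn_neqAle Hmx andbT; apply/eqP => Hx'.
  by move: Hn; rewrite Hx' Hx.
move=> Ha; apply/andP; split.
  by apply: sub_all Ha => x /orP[->//|H]; rewrite ltnW ?orbT.
apply/negP => Hin; move: (allP Ha _ Hin) => /orP[/eqP [] //|]; by rewrite ltnn.
Qed.


Lemma G_step m : (0 < m)%N -> (m < k)%N ->
  smul (sadd (sone R) (smono y m.+1)) (WS (Bp m.+1)) = WS (Bp m).
Proof.
move=> Hm0 Hmk; apply: functional_extensionality => n.
rewrite smul_addl smul_sonel smul_monol /WS.
rewrite [RHS](W_split _ _ _ _ (fun l => m.+1 \in l)).
have Hv1 : (m.+1 == 1%N) = false by apply/eqP => -[Hm]; rewrite Hm in Hm0.
rewrite (@W_step R k y z (fun l => Bp m l && (m.+1 \in l)) (Bp m.+1) m.+1 n) //; last first.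
- move=> l Hl /andP[/andP[/andP[Hu H1] Ha] Hv]; split => //.
  rewrite /Bp rem_uniq //= (mem_rem_uniq _ Hu) inE /= eq_sym Hv1 H1 /=.
  apply/allP => x; rewrite (mem_rem_uniq _ Hu) inE /= => /andP[Hxv Hx].
  move: (allP Ha x Hx) => /orP[->//|Hmx]; apply/orP; right.
  by rewrite ltn_neqAle eq_sym Hxv Hmx.
- move=> l Hl /andP[/andP[Hu H1] Ha].
  have Hvl : m.+1 \notin l.
    by apply/negP => Hin; move: (allP Ha _ Hin); rewrite Hv1 ltnn.
  rewrite kmeasure_ins //; split => //.
  rewrite /Bp uniq_ins Hvl Hu mem_ins H1 orbT all_ins Hv1 ltnSn mem_ins eqxx /=.
  by rewrite !andbT; apply: sub_all Ha => x /orP[->//|H]; rewrite ltnW ?orbT.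
rewrite addrC; congr (_ + _); apply: W_ext => l Hl; rewrite /Bp.
case Hu: (uniq l) => //=; case H1: (1%N \in l) => //=.
apply/esym; apply/idP/idP.
  case/andP=> Ha Hn; apply/allP => x Hx; move: (allP Ha x Hx) => /orP[->//|Hmx].
  apply/orP; right; rewrite ltn_neqAle Hmx andbT; apply/eqP => Hx'.
  by move: Hn; rewrite Hx' Hx.
move=> Ha; apply/andP; split.
  by apply: sub_all Ha => x /orP[->//|H]; rewrite ltnW ?orbT.
apply/negP => Hin; move: (allP Ha _ Hin) => /orP[/eqP [] //|]; first by move=> Hm; rewrite Hm in Hm0.
by rewrite ltnn.
Qed.

Lemma F_chain len m : (m + len <= k)%N ->
  smul (sprod (iota 0 len) (fun j => ssub (sone R) (smono y (m.+1 + j)))) (WS (Dp m))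
  = WS (Dp (m + len)).
Proof.
elim: len m => [|len IH] m Hle.
  by rewrite addn0 /sprod /= smul_sonel.
rewrite sprod_iota_succ /= [smul (ssub _ _) _]smulC smulA addn0.
rewrite F_step; last by rewrite -addn1 (leq_trans _ Hle) // leq_add2l.
have -> : (fun j => ssub (sone R) (smono y (m.+1 + j.+1))) = (fun j => ssub (sone R) (smono y (m.+2 + j))).
  by apply: functional_extensionality => j; rewrite addnS addSn.
rewrite IH; first by rewrite addSnnS.
by rewrite addSnnS.
Qed.

Lemma G_chain len m : (0 < m)%N -> (m + len <= k)%N ->
  WS (Bp m) = smul (sprod (iota 0 len) (fun j => sadd (sone R) (smono y (m.+1 + j)))) (WS (Bp (m + len))).
Proof.
elim: len m => [|len IH] m Hm Hle.
  by rewrite addn0 /sprod /= smul_sonel.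
rewrite sprod_iota_succ smulA addn0.
have -> : (fun j => sadd (sone R) (smono y (m.+1 + j.+1))) = (fun j => sadd (sone R) (smono y (m.+2 + j))).
  by apply: functional_extensionality => j; rewrite addnS addSn.
rewrite -addSnnS -IH //; last by rewrite addSnnS.
rewrite G_step //; by rewrite -addn1 (leq_trans _ Hle) // leq_add2l.
Qed.

End Main.

Lemma allpos_mem1 (l : seq nat) : is_partition l ->
  (1%N \notin l) = all (fun x => (1 < x)%N) l.
Proof.
case/andP=> _ Hp; apply/idP/idP.
  move=> Hn; apply/allP => x Hx; move: (allP Hp x Hx); rewrite /= leq_eqVlt => /orP[/eqP Hx1|//].
  by move: Hn; rewrite Hx1 Hx.
by move=> /allP Ha; apply/negP => /Ha.
Qed.

Lemma map_sub0 (l : seq nat) : map (subn^~ 0%N) l = l.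
Proof. by rewrite map_id_in // => x _; rewrite subn0. Qed.

Lemma uniq_map_sub j (l : seq nat) : all (fun x => j < x)%N l ->
  uniq (map (subn^~ j) l) = uniq l.
Proof.
move=> H; apply: map_inj_in_uniq => a b Ha Hb Hab.
have := congr1 (addn j) Hab; rewrite !subnKC //; apply: ltnW; exact: (allP H).
Qed.

Theorem lemma2p1 (R : comNzRingType) (k : nat) (y z : R) : (1 <= k)%N ->
  (forall n : nat,
     smul (poch y 1 k) (ssub (Fk k z (smono y 0)) (Fk k z (smono y 1))) n
     = smul (smono (y * z) 1) (Fk k z (smono y k)) n) /\
  (forall n : nat,
     ssub (Gk k z (smono y 0)) (Gk k z (smono y 1)) n
     = smul (smono (y * z) 1) (smul (pochneg y 2 k.-1) (Gk k z (smono y k))) n).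
Proof.
move=> Hk.
have Hlast1 : forall n, W k y z (Dp k) n = smul (smono (y * z) 1) (Fk k z (smono y k)) n.
  move=> n; rewrite smul_monol /Fk genfun_W.
  rewrite (@W_last R k y z (Dp k) predT n Hk).
  - rewrite subn1; case: ifP => // _; congr (_ * _); apply: W_ext => l _ /=.
  - move=> l Hl /andP[/andP[Hc Hc1] Ha].
    by split => //; [rewrite mem_count | apply/eqP; move: Hc1; rewrite (negbTE (lt0n_neq0 Hk))].
  move=> h Hh Hall _; rewrite /Dp count_cat all_cat /= addn0.
  have -> : count_mem 1%N h = 0%N.
    apply/eqP; rewrite -leqn0 leqNgt -mem_count; apply/negP => Hin.
    by move: (allP Hall _ Hin); rewrite ltnNge Hk.
  rewrite /= orbT andbT; apply: sub_all Hall => x ->; exact: orbT.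
split.
  move=> n; rewrite -Hlast1.
  have HD0 : ssub (Fk k z (smono y 0)) (Fk k z (smono y 1)) = WS k y z (Dp 0).
    apply: functional_extensionality => m; rewrite /ssub /Fk !genfun_W /WS.
    rewrite (W_split k y z _ (fun l => 0 < count_mem 1%N l)%N).
    have -> : W k y z (fun l => (all (fun x => 0 < x)%N l && predT (map (subn^~ 0%N) l)) && ~~ (0 < count_mem 1%N l)%N) m
            = W k y z (fun l => all (fun x => 1 < x)%N l && predT (map (subn^~ 1%N) l)) m.
      apply: W_ext => l Hl /=; rewrite !andbT -mem_count allpos_mem1 //.
      by case/andP: Hl => _ ->.
    rewrite addrK; apply: W_ext => l Hl /=; rewrite /Dp /= !andbT.
    case/andP: Hl => _ Hp; rewrite Hp andbC; congr (_ && _).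
    by apply/esym; apply: sub_all Hp => x /= ->; rewrite orbT.
  rewrite HD0 /poch.
  have := @F_chain R k y z Hk k 0%N (leqnn k); rewrite add0n => ->.
  done.
move=> n.
have Hlast2 : WS k y z (Bp k) = smul (smono (y * z) 1) (Gk k z (smono y k)).
  apply: functional_extensionality => m.
  rewrite smul_monol /Gk genfun_W /WS.
  rewrite (@W_last R k y z (Bp k) (fun l => uniq l) m Hk).
  - rewrite subn1; case: ifP => // _; congr (_ * _); apply: W_ext => l _ /=.
    by case Ha: (all _ l) => //=; rewrite uniq_map_sub.
  - move=> l Hl /andP[/andP[Hu H1] Ha]; split => //.
      by rewrite count_uniq_mem // H1.
    exact: filter_uniq.
  move=> h Hh Hall Hu; rewrite /Bp cat_uniq Hu /= mem_cat inE eqxx orbT /= andbT.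
  have H1h : 1%N \notin h.
    by apply/negP => Hin; move: (allP Hall _ Hin); rewrite ltnNge Hk.
  rewrite orbF (negbTE H1h) /= all_cat /= andbT; apply: sub_all Hall => x ->; exact: orbT.
have HB1 : ssub (Gk k z (smono y 0)) (Gk k z (smono y 1)) = WS k y z (Bp 1).
  apply: functional_extensionality => m0; rewrite /ssub /Gk !genfun_W /WS.
  rewrite (W_split k y z _ (fun l => 1%N \in l)).
  have -> : W k y z (fun l => (all (fun x => 0 < x)%N l && uniq (map (subn^~ 0%N) l)) && ~~ (1%N \in l)) m0
          = W k y z (fun l => all (fun x => 1 < x)%N l && uniq (map (subn^~ 1%N) l)) m0.
    apply: W_ext => l Hl /=; rewrite map_sub0 allpos_mem1 //.
    case/andP: (Hl) => _ Hp; rewrite Hp /=.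
    case Ha: (all (fun x => 1 < x)%N l); last by rewrite !andbF.
    by rewrite andbT uniq_map_sub // Ha.
  rewrite addrK; apply: W_ext => l Hl /=; rewrite /Bp map_sub0.
  case/andP: Hl => _ Hp; rewrite Hp /=.
  have -> : all (fun x => (x == 1%N) || (1 < x)%N) l.
    by apply: sub_all Hp => x /=; case: x => [|[|x]].
  by rewrite andbT.
rewrite HB1 -smulA [smul (smono _ _) (pochneg _ _ _)]smulC smulA -Hlast2.
have E : (1 + k.-1)%N = k by lia.
have Hle : (1 + k.-1 <= k)%N by rewrite E.
have := @G_chain R k y z Hk k.-1 1%N (ltnSn 0) Hle.
rewrite E => ->; done.
Qed.
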